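(* Let $n\ge 3$ be an integer, let $d_0,\dots,d_{n-1}>0$ be real numbers (indices taken modulo $n$), and let $\lambda\in(\tfrac14,1)$. Define $$\alpha_j=\frac{1}{n}\,\frac{d_{j-1}d_{j+2}}{(d_{j-1}+d_{j+1})(d_j+d_{j+2})},\qquad \beta_i=\frac{d_{i-1}(d_{i-2}+d_{i+2})+d_{i+2}(d_{i-1}+d_{i+3})}{\sum_{k=0}^{n-1}(d_k+d_{k+2})(d_{k-1}+d_{k+3})},$$ and the $n\times n$ matrix $Q_n=(Q_{i,j})_{i,j=0}^{n-1}$ by $$Q_{i,j}=\begin{cases}(1-\lambda)\beta_j+2\lambda\alpha_i\left(1+2\cos\frac{2(j-i)\pi}{n}\right), & j\neq i,\\[2pt] \lambda+(1-\lambda)\beta_i-2(n-3)\lambda\alpha_i, & j=i.\end{cases}$$ Then $1$ is an eigenvalue of $Q_n$, $\lambda$ is an eigenvalue of $Q_n$ of multiplicity two, and the remaining $n-3$ eigenvalues $\lambda_4,\dots,\lambda_n$ of $Q_n$ (counted with multiplicity) satisfy $|\lambda_k|<\lambda$; i.e. $\lambda_1=1>\lambda_2=\lambda_3=\lambda>|\lambda_k|$ for $k=4,\dots,n$.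
   Context: $Q_n$ is the block of the subdivision matrix of a (tuned hybrid non-uniform) subdivision scheme acting on the $n$ vertices of the polygonal face surrounding an extraordinary vertex of valence $n$, where $d_j$ are the knot intervals of the edges around that face and $\lambda$ is the tuning parameter. Note $\beta_i$ is the coefficient of $P_i$ in $C=\frac{\sum_{i}(d_iP_{i+1}+d_{i+2}P_i)(d_{i-1}+d_{i+3})}{\sum_j(d_j+d_{j+2})(d_{j-1}+d_{j+3})}$. *)

(* Defs.v *)
From HB Require Import structures.
From mathcomp Require Import all_boot all_order all_algebra.
From mathcomp Require Import reals trigo.
From mathcomp Require Import complex.
Set Implicit Arguments. Unset Strict Implicit. Unset Printing Implicit Defensive.
Import Order.TTheory GRing.Theory Num.Theory.
Local Open Scope ring_scope.

Section QDefs.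
Variables (R : realType) (n : nat) (d : nat -> R) (lam : R).

Definition dm (k : nat) : R := d (k %% n)%N.

(* alpha_j = 1/n * d_{j-1} d_{j+2} / ((d_{j-1}+d_{j+1})(d_j+d_{j+2})) ;
   j-1 is encoded as j+n-1 (mod n) *)
Definition alpha (j : nat) : R :=
  n%:R^-1 * (dm (j + n - 1) * dm (j + 2)) /
  ((dm (j + n - 1) + dm (j + 1)) * (dm j + dm (j + 2))).

Definition beta_den : R :=
  \sum_(k < n) (dm k + dm (k + 2)) * (dm (k + n - 1) + dm (k + 3)).

Definition beta (i : nat) : R :=
  (dm (i + n - 1) * (dm (i + n - 2) + dm (i + 2))
   + dm (i + 2) * (dm (i + n - 1) + dm (i + 3))) / beta_den.

Definition Qmat : 'M[R]_n :=
  \matrix_(i < n, j < n)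
    if i == j then lam + (1 - lam) * beta i - 2 * (n%:R - 3) * lam * alpha i
    else (1 - lam) * beta j
         + 2 * lam * alpha i
           * (1 + 2 * cos (2 * (((j : int) - (i : int))%:~R) * pi / n%:R)).

End QDefs.

(* Main.v *)
Require Import Defs.
From HB Require Import structures.
From mathcomp Require Import all_boot all_order all_algebra.
From mathcomp Require Import reals trigo.
From mathcomp Require Import complex.
From mathcomp Require Import ring lra zify.
Set Implicit Arguments. Unset Strict Implicit. Unset Printing Implicit Defensive.
Import Order.TTheory GRing.Theory Num.Theory.
Local Open Scope ring_scope.

Lemma det33 (Rg : comNzRingType) (g : nat -> nat -> Rg) :
  \det (\matrix_(i < 3, j < 3) g i j) =
    g 0 0 * (g 1 1 * g 2 2 - g 1 2 * g 2 1)
  - g 0 1 * (g 1 0 * g 2 2 - g 1 2 * g 2 0)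
  + g 0 2 * (g 1 0 * g 2 1 - g 1 1 * g 2 0).
Proof.
rewrite (expand_det_row _ 0) !big_ord_recl big_ord0 /cofactor.
rewrite !(expand_det_row _ 0) !big_ord_recl big_ord0 /cofactor !det_mx11 !mxE /=.
rewrite !big_ord0 /=.
rewrite /bump /=. ring.
Qed.

Section Block.
Variables (F K : fieldType) (f : {rmorphism F -> K}).

Lemma char_poly_sim k (S A : 'M[F]_k) : S \in unitmx ->
  char_poly (invmx S *m A *m S) = char_poly A.
Proof.
move=> hS.
have hp : (invmx S ^ polyC)%sesqui *m (S ^ polyC)%sesqui = 1%:M.
  by rewrite -map_mxM mulVmx // map_mx1.
rewrite /char_poly /char_poly_mx !map_mxM.
have e : ('X%:M : 'M[{poly F}]_k) = (invmx S ^ polyC)%sesqui *m 'X%:M *m (S ^ polyC)%sesqui.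
  by rewrite scalar_mxC -mulmxA hp mulmx1.
rewrite [in LHS]e -mulmxBl -mulmxBr !det_mulmx mulrAC -det_mulmx.
by rewrite hp det1 mul1r.
Qed.

Lemma char_poly_ublock m1 m2 (A : 'M[F]_m1) (Y : 'M[F]_(m1, m2)) (B : 'M[F]_m2) :
  char_poly (block_mx A Y 0 B) = char_poly A * char_poly B.
Proof.
rewrite /char_poly /char_poly_mx map_block_mx (scalar_mx_block m1 m2).
rewrite opp_block_mx add_block_mx /= map_mx0 oppr0 addr0.
by rewrite det_ublock.
Qed.

Lemma block_lemma m (Q : 'M[F]_(3 + m)) (V : 'M[F]_(3 + m, 3)) (T : 'M[F]_3) :
  \det (usubmx V) != 0 -> Q *m V = V *m T ->
  exists B : 'M[F]_m,
    char_poly Q = char_poly T * char_poly B /\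
    forall z, root (map_poly f (char_poly B)) z ->
      exists2 u : 'rV[K]_(3 + m), u != 0 &
        (u *m (Q ^ f)%sesqui = z *: u /\ u *m (V ^ f)%sesqui = 0).
Proof.
move=> hdet QV.
pose S : 'M[F]_(3 + m) := block_mx (usubmx V) 0 (dsubmx V) 1%:M.
have hS : S \in unitmx by rewrite unitmxE det_lblock det1 mulr1 unitfE.
have SV : S *m col_mx 1%:M 0 = V.
  by rewrite mul_block_col !mulmx1 !mulmx0 !addr0 vsubmxK.
pose M := invmx S *m Q *m S.
have MC : M *m col_mx 1%:M 0 = col_mx T 0.
  rewrite /M -!mulmxA SV QV -SV mulmxA mulKmx // mul_col_mx mul1mx mul0mx.
  by [].
have : M *m col_mx 1%:M 0 = col_mx (ulsubmx M) (dlsubmx M).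
  by rewrite -{1}[M]submxK mul_block_col !mulmx1 !mulmx0 !addr0.
rewrite MC => /eq_col_mx [hul hdl].
have Mb : M = block_mx T (ursubmx M) 0 (drsubmx M).
  by rewrite hul hdl submxK.
exists (drsubmx M); split.
  by rewrite -(char_poly_sim Q hS) -/M {1}Mb char_poly_ublock.
move=> z; rewrite map_char_poly -eigenvalue_root_char => /eigenvalueP [v hv vn0].
pose S' := (S ^ f)%sesqui.
have hS' : S' \in unitmx by rewrite map_unitmx.
pose u := row_mx 0 v *m invmx S'.
have uS : u *m S' = row_mx 0 v by rewrite /u mulmxKV.
have SM : S' *m (M ^ f)%sesqui = (Q ^ f)%sesqui *m S'.
  by rewrite -!map_mxM /M !mulmxA mulmxV // mul1mx.
exists u.
  apply/negP => /eqP u0; move: uS; rewrite u0 mul0mx => /esym/eqP.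
  by rewrite row_mx_eq0 (negbTE vn0) andbF.
split.
  have -> : (Q ^ f)%sesqui = S' *m (M ^ f)%sesqui *m invmx S'.
    by rewrite SM mulmxK.
  rewrite /u !mulmxA mulmxKV // Mb map_block_mx map_mx0 mul_row_block.
  by rewrite !mul0mx !mulmx0 ?add0r ?addr0 hv scalemxAl scale_row_mx scaler0.
by rewrite -SV map_mxM mulmxA uS map_col_mx map_mx1 map_mx0 mul_row_col mulmx1 !mulmx0 ?addr0.
Qed.

End Block.

Section Trig.
Variable R : realType.

Lemma tele_cos (a : R) (n k : nat) : sin (a / 2) != 0 -> a * n%:R = (pi *+ 2) *+ k ->
  \sum_(j < n) cos (a * j%:R) = 0 /\ \sum_(j < n) sin (a * j%:R) = 0.
Proof.
move=> hs han; set h := a / 2.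
have ha : a = h + h by rewrite /h; field.
pose g (j : nat) := sin (a * j%:R - h).
pose g' (j : nat) := cos (a * j%:R - h).
have gn : g n = g 0%N.
  by rewrite /g han mulr0 add0r addrC periodicn //; apply: sinD2pi.
have gn' : g' n = g' 0%N.
  by rewrite /g' han mulr0 add0r addrC periodicn //; apply: cosD2pi.
have e1 : \sum_(j < n) (g j.+1 - g j) = (sin h *+ 2) * \sum_(j < n) cos (a * j%:R).
  rewrite mulr_sumr; apply: eq_bigr => j _.
  rewrite /g -addn1 natrD mulrDr mulr1 (_ : a * j%:R + a - h = a * j%:R + h) ?sinB ?sinD; [ring| rewrite ha; ring].
have e2 : \sum_(j < n) (g' j - g' j.+1) = (sin h *+ 2) * \sum_(j < n) sin (a * j%:R).
  rewrite mulr_sumr; apply: eq_bigr => j _.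
  rewrite /g' -addn1 natrD mulrDr mulr1 (_ : a * j%:R + a - h = a * j%:R + h) ?cosB ?cosD; [ring| rewrite ha; ring].
have t1 : \sum_(j < n) (g j.+1 - g j) = 0.
  by rewrite -(big_mkord xpredT (fun j => g j.+1 - g j)) telescope_sumr // gn subrr.
have t2 : \sum_(j < n) (g' j - g' j.+1) = 0.
  rewrite (eq_bigr (fun j : 'I_n => - (g' j.+1 - g' j))); last by move=> j _; rewrite opprB.
  by rewrite sumrN -(big_mkord xpredT (fun j => g' j.+1 - g' j)) telescope_sumr // gn' subrr oppr0.
have hs2 : sin h *+ 2 != 0 by rewrite mulrn_eq0 negb_or hs.
split.
  by apply/eqP; move: t1; rewrite e1 => /eqP; rewrite mulf_eq0 (negbTE hs2).
by apply/eqP; move: t2; rewrite e2 => /eqP; rewrite mulf_eq0 (negbTE hs2).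
Qed.
End Trig.

Section Main.
Variables (R : realType) (n : nat) (d : nat -> R) (lam : R).
Hypothesis hn : (2 < n)%N.

Definition cs (k : nat) : R := cos (2 * k%:R * pi / n%:R).
Definition sn (k : nat) : R := sin (2 * k%:R * pi / n%:R).

Lemma n_gt0 : (0 : R) < n%:R. Proof. by rewrite ltr0n; case: n hn. Qed.

Lemma trig_sums1 :
  \sum_(j < n) cs j = 0 /\ \sum_(j < n) sn j = 0.
Proof.
have := @tele_cos R (2 * pi / n%:R) n 1.
have -> : 2 * pi / n%:R / 2 = pi / n%:R :> R by field; rewrite lt0r_neq0 // n_gt0.
have e : forall j : nat, 2 * j%:R * pi / n%:R = 2 * pi / n%:R * j%:R :> R.
  by move=> j; ring.
case.
- rewrite gt_eqF // sin_gt0_pi // divr_gt0 ?pi_gt0 ?n_gt0 //=.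
  rewrite ltr_pdivrMr ?n_gt0 // ltr_pMr ?pi_gt0 // ltr1n; by case: n hn => [|[|]].
- rewrite -mulrA mulVf ?mulr1 ?lt0r_neq0 ?n_gt0 //.
  by rewrite mulr_natl.
move=> h1 h2; split.
  by rewrite -[RHS]h1; apply: eq_bigr => j _; rewrite /cs e.
by rewrite -[RHS]h2; apply: eq_bigr => j _; rewrite /sn e.
Qed.

Lemma trig_sums2 :
  \sum_(j < n) cs j ^+ 2 = n%:R / 2 /\ \sum_(j < n) sn j ^+ 2 = n%:R / 2
  /\ \sum_(j < n) cs j * sn j = 0.
Proof.
have := @tele_cos R (4 * pi / n%:R) n 2.
have -> : 4 * pi / n%:R / 2 = 2 * pi / n%:R :> R by field; rewrite lt0r_neq0 // n_gt0.
case.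
- rewrite gt_eqF // sin_gt0_pi // divr_gt0 ?mulr_gt0 ?pi_gt0 ?n_gt0 //=.
  rewrite ltr_pdivrMr ?n_gt0 // mulrC ltr_pM2l ?pi_gt0 // ltr_nat //.
- rewrite -mulrA mulVf ?mulr1 ?lt0r_neq0 ?n_gt0 //.
  by rewrite -mulrnA mulr_natl.
move=> h1 h2.
have ec : forall j : nat, cos (4 * pi / n%:R * j%:R) = cs j ^+ 2 *+ 2 - 1.
  move=> j; rewrite /cs -cos_mulr2n; congr cos; rewrite mulr2n; ring.
have es : forall j : nat, sin (4 * pi / n%:R * j%:R) = (cs j * sn j) *+ 2.
  move=> j; rewrite /cs /sn -sin_mulr2n; congr sin; rewrite mulr2n; ring.
have hc : \sum_(j < n) cs j ^+ 2 = n%:R / 2.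
  have : \sum_(j < n) (cs j ^+ 2 *+ 2 - 1) = 0.
    by rewrite -[RHS]h1; apply: eq_bigr => j _; rewrite ec.
  rewrite sumrB sumr_const card_ord sumrMnl => /eqP; rewrite subr_eq0 => /eqP h.
  by rewrite -h mulr2n; field.
split => //; split.
  have e : forall j : 'I_n, sn j ^+ 2 = 1 - cs j ^+ 2.
    by move=> j; rewrite /sn /cs sin2cos2.
  rewrite (eq_bigr _ (fun j _ => e j)) sumrB hc sumr_const card_ord.
  by field.
have : \sum_(j < n) (cs j * sn j) *+ 2 = 0.
  by rewrite -[RHS]h2; apply: eq_bigr => j _; rewrite es.
rewrite sumrMnl => /eqP; rewrite -mulr_natr mulf_eq0 pnatr_eq0 orbF => /eqP //.
Qed.

Local Notation al := (alpha n d).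
Local Notation be := (beta n d).
Local Notation Q := (Qmat n d lam).

Lemma Qij (i j : 'I_n) : Q i j = lam * (i == j)%:R + (1 - lam) * be j
  + 2 * lam * al i * (1 + 2 * (cs i * cs j + sn i * sn j) - n%:R * (i == j)%:R).
Proof.
rewrite /Qmat mxE; case: eqP => [<-|ne].
  rewrite !mulr1 /cs /sn -!expr2 cos2Dsin2; ring.
rewrite !mulr0 ?subr0 ?addr0.
have -> : ((j : int) - (i : int))%:~R = j%:R - i%:R :> R by rewrite intrB.
rewrite (_ : 2 * (j%:R - i%:R) * pi / n%:R = 2 * j%:R * pi / n%:R - 2 * i%:R * pi / n%:R); last by ring.
rewrite cosB /cs /sn; ring.
Qed.

Lemma sum_delta (v : 'I_n -> R) (i : 'I_n) : \sum_j (i == j)%:R * v j = v i.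
Proof.
rewrite (bigD1 i) //= eqxx mul1r big1 ?addr0 // => j /negbTE.
by rewrite eq_sym => ->; rewrite mul0r.
Qed.

Lemma Qmul (v : 'I_n -> R) (i : 'I_n) :
  \sum_(j < n) Q i j * v j = lam * v i + (1 - lam) * (\sum_(j < n) be j * v j)
   + 2 * lam * al i * (\sum_(j < n) v j + 2 * cs i * (\sum_(j < n) cs j * v j)
        + 2 * sn i * (\sum_(j < n) sn j * v j) - n%:R * v i).
Proof.
rewrite (eq_bigr (fun j : 'I_n => lam * ((i == j)%:R * v j) + (1 - lam) * (be j * v j)
  + 2 * lam * al i * (v j + 2 * cs i * (cs j * v j) + 2 * sn i * (sn j * v j)
      - n%:R * ((i == j)%:R * v j)))); last by move=> j _; rewrite Qij; ring.
rewrite !big_split /= ?sumrN -!mulr_sumr !sum_delta.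
rewrite !big_split /= ?sumrN -!mulr_sumr !sum_delta.
ring.
Qed.

Hypothesis hd : forall k, (k < n)%N -> 0 < d k.
Local Notation D := (dm n d).

Lemma D_gt0 k : 0 < D k.
Proof. by rewrite /dm hd // ltn_pmod //; case: n hn. Qed.

Lemma D_add_n k : D (k + n) = D k.
Proof. by rewrite /dm modnDr. Qed.

Lemma sum_pos (F : 'I_n -> R) (i0 : 'I_n) :
  (forall i, 0 <= F i) -> 0 < F i0 -> 0 < \sum_(i < n) F i.
Proof.
move=> h0 h1; rewrite (bigD1 i0) //=.
have : 0 <= \sum_(i < n | i != i0) F i by apply: sumr_ge0 => i _; apply: h0.
lra.
Qed.

Lemma shift_sum (f : nat -> R) c : (forall k, f (k + n)%N = f k) ->
  \sum_(k < n) f (k + c)%N = \sum_(k < n) f k.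
Proof.
move=> hp; elim: c => [|c IH]; first by apply: eq_bigr => k _; rewrite addn0.
rewrite -[RHS]IH.
case: n hn hp => [//|n'] _ hp.
rewrite big_ord_recr big_ord_recl /=.
rewrite (_ : (n' + c.+1 = 0 + c + n'.+1)%N); last by lia.
rewrite hp addrC; congr (_ + _); apply: eq_bigr => k _ /=.
by rewrite /bump /= add1n addnS addSn.
Qed.

Definition adj k := D k * D (k + 1).
Definition dst k := D k * D (k + 3).

Lemma adj_per k : adj (k + n) = adj k.
Proof. by rewrite /adj D_add_n (_ : (k + n + 1 = k + 1 + n)%N) ?D_add_n //; lia. Qed.
Lemma dst_per k : dst (k + n) = dst k.
Proof. by rewrite /dst D_add_n (_ : (k + n + 3 = k + 3 + n)%N) ?D_add_n //; lia. Qed.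

Lemma beta_num_eq i :
  D (i + n - 1) * (D (i + n - 2) + D (i + 2)) + D (i + 2) * (D (i + n - 1) + D (i + 3))
  = adj (i + (n - 2)) + dst (i + (n - 1)) *+ 2 + adj (i + 2).
Proof.
rewrite /adj /dst (_ : (i + (n - 2) + 1 = i + n - 1)%N); last by lia.
rewrite (_ : (i + (n - 1) + 3 = i + 2 + n)%N); last by lia.
rewrite (_ : (i + (n - 2) = i + n - 2)%N); last by lia.
rewrite (_ : (i + (n - 1) = i + n - 1)%N); last by lia.
rewrite D_add_n (_ : (i + 2 + 1 = i + 3)%N) //; ring.
Qed.

Lemma beta_den_eq k :
  (D k + D (k + 2)) * (D (k + n - 1) + D (k + 3))
  = adj (k + (n - 1)) + dst k + dst (k + (n - 1)) + adj (k + 2).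
Proof.
rewrite /adj /dst (_ : (k + (n - 1) + 1 = k + n)%N); last by lia.
rewrite (_ : (k + (n - 1) + 3 = k + 2 + n)%N); last by lia.
rewrite (_ : (k + (n - 1) = k + n - 1)%N); last by lia.
rewrite !D_add_n (_ : (k + 2 + 1 = k + 3)%N); [ring | lia].
Qed.

Lemma beta_den_gt0 : 0 < beta_den n d.
Proof.
rewrite /beta_den; apply: (@sum_pos _ (Ordinal (ltnW (ltnW hn)))) => [i|]; [apply: ltW|];
  by apply: mulr_gt0; apply: addr_gt0; apply: D_gt0.
Qed.

Lemma beta_sum : \sum_(j < n) be j = 1.
Proof.
rewrite /beta -mulr_suml.
rewrite (eq_bigr _ (fun (j : 'I_n) _ => beta_num_eq j)) /beta_den (eq_bigr _ (fun (j : 'I_n) _ => beta_den_eq j)).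
rewrite !big_split /= ?sumrMnl !(shift_sum _ adj_per) !(shift_sum _ dst_per).
set A := \sum_(k < n) adj k; set B := \sum_(k < n) dst k.
rewrite (_ : A + (B + B) + A = A + B + B + A); last by ring.
rewrite mulfV //; apply: lt0r_neq0.
have := beta_den_gt0; rewrite /beta_den.
by rewrite (eq_bigr _ (fun (j : 'I_n) _ => beta_den_eq j)) !big_split /= !(shift_sum _ adj_per) !(shift_sum _ dst_per).
Qed.

Lemma al_bounds k : 0 < al k /\ n%:R * al k < 1.
Proof.
rewrite /alpha.
set a := D (k + n - 1); set b := D (k + 2); set c := D (k + 1); set e := D k.
have ha : 0 < a := D_gt0 _. have hb : 0 < b := D_gt0 _.
have hc : 0 < c := D_gt0 _. have he : 0 < e := D_gt0 _.
have hden : 0 < (a + c) * (e + b) by apply: mulr_gt0; apply: addr_gt0.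
have hN := n_gt0.
split.
  by apply: divr_gt0 => //; apply: mulr_gt0; [rewrite invr_gt0 | apply: mulr_gt0].
rewrite (_ : n%:R * (n%:R^-1 * (a * b) / ((a + c) * (e + b))) = (a * b) / ((a + c) * (e + b))); last first.
  by field; rewrite !lt0r_neq0 //; apply: addr_gt0.
rewrite ltr_pdivrMr // mul1r.
have h1 := mulr_gt0 ha he. have h2 := mulr_gt0 hc he. have h3 := mulr_gt0 hc hb.
have -> : (a + c) * (e + b) = a * b + (a * e + c * e + c * b) by ring.
lra.
Qed.

Lemma form_eq (w v : 'I_n -> R) :
  \sum_(j < n) w j = 0 -> \sum_(j < n) v j = 0 -> \sum_(j < n) cs j * v j = 0 ->
  \sum_(j < n) sn j * v j = 0 ->
  \sum_(j < n) (\sum_(i < n) w i * Q i j) * v j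
    = lam * (\sum_(j < n) w j * v j) - 2 * n%:R * lam * (\sum_(j < n) al j * w j * v j).
Proof.
move=> hw hv hcv hsv.
have -> : \sum_(j < n) (\sum_(i < n) w i * Q i j) * v j
    = \sum_(i < n) w i * (\sum_(j < n) Q i j * v j).
  rewrite (eq_bigr (fun j : 'I_n => \sum_(i < n) w i * Q i j * v j)); last first.
    by move=> j _; rewrite mulr_suml.
  rewrite exchange_big /=; apply: eq_bigr => i _; rewrite mulr_sumr.
  by apply: eq_bigr => j _; rewrite mulrA.
rewrite (eq_bigr (fun i : 'I_n => lam * (w i * v i) + (1 - lam) * (\sum_(j < n) be j * v j) * w i
   - 2 * n%:R * lam * (al i * w i * v i))); last first.
  by move=> i _; rewrite Qmul hv hcv hsv; ring.
rewrite !big_split /= ?sumrN -!mulr_sumr hw; ring.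
Qed.

Hypothesis hlam : 0 < lam.

Lemma sqr_pos (x : R) : x != 0 -> 0 < x ^+ 2.
Proof. by move=> h; rewrite lt0r sqr_ge0 sqrf_eq0 h. Qed.

Lemma lin2 (a b : R) (f g h : 'I_n -> R) :
  \sum_(j < n) (a * f j + b * g j) * h j
   = a * (\sum_(j < n) f j * h j) + b * (\sum_(j < n) g j * h j).
Proof.
rewrite !mulr_sumr -big_split /=; apply: eq_bigr => j _; ring.
Qed.

Lemma sum_pos2 (w q : 'I_n -> R) j0 : (forall j, 0 < w j) -> (forall j, 0 <= q j) ->
  0 < q j0 -> 0 < \sum_(j < n) w j * q j.
Proof.
move=> hw hq h0; apply: (sum_pos (i0 := j0)) => [j|].
  by apply: mulr_ge0 => //; apply: ltW.
exact: mulr_gt0.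
Qed.

Lemma final_real (ur ui : 'I_n -> R) (x y : R) :
  \sum_(j < n) ur j = 0 -> \sum_(j < n) cs j * ur j = 0 -> \sum_(j < n) sn j * ur j = 0 ->
  \sum_(j < n) ui j = 0 -> \sum_(j < n) cs j * ui j = 0 -> \sum_(j < n) sn j * ui j = 0 ->
  (forall j, \sum_(i < n) ur i * Q i j = x * ur j - y * ui j) ->
  (forall j, \sum_(i < n) ui i * Q i j = x * ui j + y * ur j) ->
  (exists j, (ur j != 0) || (ui j != 0)) ->
  y = 0 /\ `|x| < lam.
Proof.
move=> r1 r2 r3 i1 i2 i3 hr hi [j0 hj0].
have Fri := form_eq r1 i1 i2 i3.
have Fir := form_eq i1 r1 r2 r3.
have Frr := form_eq r1 r1 r2 r3.
have Fii := form_eq i1 i1 i2 i3.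
have er : forall j, \sum_(i < n) ur i * Q i j = x * ur j + (- y) * ui j.
  by move=> j; rewrite hr mulNr.
rewrite (eq_bigr _ (fun j _ => congr1 (fun t => t * _) (er j))) lin2 in Fri.
rewrite (eq_bigr _ (fun j _ => congr1 (fun t => t * _) (er j))) lin2 in Frr.
rewrite (eq_bigr _ (fun j _ => congr1 (fun t => t * _) (hi j))) lin2 in Fir.
rewrite (eq_bigr _ (fun j _ => congr1 (fun t => t * _) (hi j))) lin2 in Fii.
have pc : \sum_(j < n) ui j * ur j = \sum_(j < n) ur j * ui j.
  by apply: eq_bigr => j _; rewrite mulrC.
have ac : \sum_(j < n) al j * ui j * ur j = \sum_(j < n) al j * ur j * ui j.
  by apply: eq_bigr => j _; rewrite mulrAC.
rewrite pc ac in Fir. rewrite pc in Frr.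
set p := \sum_(j < n) ur j * ui j in Fri Fir Frr Fii.
set quu := \sum_(j < n) ur j * ur j in Fri Fir Frr Fii.
set qii := \sum_(j < n) ui j * ui j in Fri Fir Frr Fii.
set aui := \sum_(j < n) al j * ur j * ui j in Fri Fir Frr Fii.
set auu := \sum_(j < n) al j * ur j * ur j in Fri Fir Frr Fii.
set aii := \sum_(j < n) al j * ui j * ui j in Fri Fir Frr Fii.
have hN : 0 < quu + qii.
  rewrite /quu /qii -big_split /=.
  rewrite (eq_bigr (fun j : 'I_n => 1 * (ur j ^+ 2 + ui j ^+ 2))); last first.
    by move=> j _; rewrite mul1r !expr2.
  apply: (sum_pos2 (j0 := j0)) => [j|j|]; first exact: ltr01.
    by apply: addr_ge0; apply: sqr_ge0.
  have := sqr_ge0 (ur j0); have := sqr_ge0 (ui j0).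
  case/orP: hj0 => /sqr_pos h; lra.
have hsq : forall j, 0 <= ur j ^+ 2 + ui j ^+ 2.
  by move=> j; apply: addr_ge0; apply: sqr_ge0.
have hsq0 : 0 < ur j0 ^+ 2 + ui j0 ^+ 2.
  have := sqr_ge0 (ur j0); have := sqr_ge0 (ui j0).
  case/orP: hj0 => /sqr_pos h; lra.
have hA : 0 < auu + aii.
  rewrite /auu /aii -big_split /=.
  rewrite (eq_bigr (fun j : 'I_n => al j * (ur j ^+ 2 + ui j ^+ 2))); last first.
    by move=> j _; rewrite !expr2; ring.
  by apply: (sum_pos2 (j0 := j0)) => // j; case: (al_bounds j).
have hB : n%:R * (auu + aii) < quu + qii.
  rewrite -subr_gt0 /auu /aii /quu /qii -!big_split /= mulr_sumr -sumrN -big_split /=.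
  rewrite (eq_bigr (fun j : 'I_n => (1 - n%:R * al j) * (ur j ^+ 2 + ui j ^+ 2))); last first.
    by move=> j _; rewrite !expr2; ring.
  apply: (sum_pos2 (j0 := j0)) => // j; case: (al_bounds j) => _; lra.
set N := quu + qii in hN hB. set A := auu + aii in hA hB.
have hyN : y * N = 0 by rewrite /N; lra.
have hy : y = 0.
  by move/eqP: hyN; rewrite mulf_eq0 (gt_eqF hN) orbF => /eqP.
subst y.
have hx : x * N = lam * N - 2 * n%:R * lam * A by rewrite /N /A; lra.
split => //.
set t := n%:R * A / N.
have ht0 : 0 < t by rewrite /t divr_gt0 // mulr_gt0 // n_gt0.
have ht1 : t < 1 by rewrite /t ltr_pdivrMr // mul1r.
have hxt : x = lam - 2 * (lam * t).
  apply: (mulIf (lt0r_neq0 hN)); rewrite /= hx /t; field; exact: lt0r_neq0 hN.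
have h1 : 0 < lam * t by apply: mulr_gt0.
have h2 : lam * t < lam by rewrite gtr_pMr.
rewrite ltr_norml hxt; apply/andP; split; lra.
Qed.

Definition vv (k i : nat) : R := if k is 0 then 1 else if k is 1 then cs i else sn i.
Definition Vm : 'M[R]_(n, 3) := \matrix_(i < n, k < 3) vv k i.
Definition gc := (1 - lam) * \sum_(j < n) be j * cs j.
Definition gs := (1 - lam) * \sum_(j < n) be j * sn j.
Definition tt (a b : nat) : R :=
  match a, b with
  | 0, 0 => 1 | 0, 1 => gc | 0, 2 => gs | 1, 1 => lam | 2, 2 => lam | _, _ => 0
  end.
Definition Tm : 'M[R]_3 := \matrix_(a < 3, b < 3) tt a b.

Lemma sum_mul1 (F : 'I_n -> R) : \sum_(j < n) F j * 1 = \sum_(j < n) F j.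
Proof. by apply: eq_bigr => j _; rewrite mulr1. Qed.

Lemma QV : Q *m Vm = Vm *m Tm.
Proof.
have [s1 s2] := trig_sums1.
have [s3 [s4 s5]] := trig_sums2.
have s3' : \sum_(j < n) cs j * cs j = n%:R / 2.
  by rewrite -s3; apply: eq_bigr => j _; rewrite expr2.
have s4' : \sum_(j < n) sn j * sn j = n%:R / 2.
  by rewrite -s4; apply: eq_bigr => j _; rewrite expr2.
have s5' : \sum_(j < n) sn j * cs j = 0.
  by rewrite -[RHS]s5; apply: eq_bigr => j _; rewrite mulrC.
apply/matrixP => i k; rewrite !mxE.
rewrite (eq_bigr (fun j : 'I_n => Q i j * vv k j)); last by move=> j _; congr (_ * _); rewrite /Vm mxE.
rewrite Qmul !big_ord_recl big_ord0 /Vm /Tm !mxE /=.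
case: k => [[|[|[|//]]] hk] /=.
- rewrite !sum_mul1 beta_sum s1 s2 sumr_const card_ord /tt; ring.
- by rewrite s1 s3' s5' /tt /gc; field.
- by rewrite s2 s5 s4' /tt /gs; field.
Qed.

Lemma det_top : \det (\matrix_(i < 3, j < 3) vv j i) != 0.
Proof.
rewrite (det33 (fun i j => vv j i)) /=.
have c0 : cs 0 = 1 by rewrite /cs mulr0 !mul0r cos0.
have s0 : sn 0 = 0 by rewrite /sn mulr0 !mul0r sin0.
have e2 : 2 * 2%:R * pi / n%:R = (2 * 1%:R * pi / n%:R) *+ 2 :> R by rewrite mulr2n; ring.
have c2 : cs 2 = cs 1 ^+ 2 *+ 2 - 1 by rewrite /cs e2 cos_mulr2n.
have sn2 : sn 2 = (cs 1 * sn 1) *+ 2 by rewrite /sn /cs e2 sin_mulr2n.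
rewrite c0 s0 c2 sn2.
have -> : 1 * (cs 1 * ((cs 1 * sn 1) *+ 2) - sn 1 * (cs 1 ^+ 2 *+ 2 - 1))
   - 1 * (1 * ((cs 1 * sn 1) *+ 2) - sn 1 * 1) + 0 * (1 * (cs 1 ^+ 2 *+ 2 - 1) - cs 1 * 1)
   = 2 * sn 1 * (1 - cs 1) by rewrite !mulr2n; ring.
have hs : 0 < sn 1.
  rewrite /sn sin_gt0_pi // mulr1 divr_gt0 ?mulr_gt0 ?pi_gt0 ?n_gt0 //=.
  rewrite ltr_pdivrMr ?n_gt0 // mulrC ltr_pM2l ?pi_gt0 // ltr_nat //.
have hc : cs 1 < 1.
  rewrite lt_neqAle cos_le1 andbT; apply/eqP => h.
  have h2 : cs 1 ^+ 2 + sn 1 ^+ 2 = 1 by exact: cos2Dsin2.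
  rewrite h expr1n in h2.
  have : sn 1 ^+ 2 = 0 by lra.
  by move/eqP; rewrite sqrf_eq0 (gt_eqF hs).
apply: lt0r_neq0; apply: mulr_gt0; [apply: mulr_gt0 => //|]; lra.
Qed.

End Main.

Section Cplx.
Variable R : realType.
Local Notation Re := (@complex.Re R).
Local Notation Im := (@complex.Im R).
Local Open Scope complex_scope.

Lemma ReD (a b : R[i]) : Re (a + b) = Re a + Re b. Proof. by case: a => ? ?; case: b. Qed.
Lemma ImD (a b : R[i]) : Im (a + b) = Im a + Im b. Proof. by case: a => ? ?; case: b. Qed.
Lemma Re_sum m (F : 'I_m -> R[i]) : Re (\sum_(i < m) F i) = \sum_(i < m) Re (F i).
Proof. by apply: (big_morph _ ReD). Qed.
Lemma Im_sum m (F : 'I_m -> R[i]) : Im (\sum_(i < m) F i) = \sum_(i < m) Im (F i).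
Proof. by apply: (big_morph _ ImD). Qed.
Lemma ReMr (a : R[i]) (r : R) : Re (a * r%:C) = Re a * r.
Proof. by case: a => a b /=; rewrite mulr0 subr0. Qed.
Lemma ImMr (a : R[i]) (r : R) : Im (a * r%:C) = Im a * r.
Proof. by case: a => a b /=; rewrite mulr0 add0r. Qed.
Lemma ReM (z a : R[i]) : Re (z * a) = Re z * Re a - Im z * Im a.
Proof. by case: z => ? ?; case: a. Qed.
Lemma ImM (z a : R[i]) : Im (z * a) = Re z * Im a + Im z * Re a.
Proof. by case: z => ? ?; case: a. Qed.

Lemma Re_mul m p (u : 'rV[R[i]]_m) (A : 'M[R]_(m, p)) k :
  Re ((u *m map_mx (real_complex R) A) 0 k) = \sum_(j < m) Re (u 0 j) * A j k.
Proof. by rewrite mxE Re_sum; apply: eq_bigr => j _; rewrite mxE ReMr. Qed.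
Lemma Im_mul m p (u : 'rV[R[i]]_m) (A : 'M[R]_(m, p)) k :
  Im ((u *m map_mx (real_complex R) A) 0 k) = \sum_(j < m) Im (u 0 j) * A j k.
Proof. by rewrite mxE Im_sum; apply: eq_bigr => j _; rewrite mxE ImMr. Qed.
End Cplx.

Unset Implicit Arguments.

Theorem lemma1 (R : realType) (n : nat) (d : nat -> R) (lam : R)
    (hn : (3 <= n)%N) (hd : forall k, (k < n)%N -> 0 < d k)
    (hl1 : 1 / 4 < lam) (hl2 : lam < 1) :
  exists p : {poly R},
    char_poly (Qmat n d lam) = ('X - 1) * ('X - lam%:P) ^+ 2 * p /\
    forall z : R[i], root (map_poly (fun x : R => x%:C%C) p) z ->
      `|z| < lam%:C%C.
Proof.
have hlam : 0 < lam by lra.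
case: n hn hd => [|[|[|m]]] // hn hd.
have hdet : \det (usubmx (Vm R m.+3 : 'M_(3 + m, 3))) != 0.
  have -> : usubmx (Vm R m.+3 : 'M_(3 + m, 3)) = \matrix_(i < 3, j < 3) vv R m.+3 j i.
    by apply/matrixP => i j; rewrite !mxE.
  exact: det_top.
have [B [hch heig]] := block_lemma (real_complex R) hdet (QV lam hn hd).
exists (char_poly B); split.
  rewrite hch; congr (_ * _).
  rewrite /char_poly (_ : char_poly_mx _ = \matrix_(i < 3, j < 3)
      ('X *+ (i == j)%N - (tt m.+3 d lam i j)%:P)); last first.
    by apply/matrixP => i j; rewrite !mxE.
  rewrite (det33 (fun a b => 'X *+ (a == b)%N - (tt m.+3 d lam a b)%:P)) /tt /=.
  by rewrite !polyC0 polyC1; ring.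
move=> z hz.
have [u un0 [uQ uV]] := heig z hz.
pose ur (j : 'I_m.+3) := complex.Re (u 0 j).
pose ui (j : 'I_m.+3) := complex.Im (u 0 j).
have hV : forall k : 'I_3, \sum_(j < m.+3) ur j * vv R m.+3 k j = 0 /\
                          \sum_(j < m.+3) ui j * vv R m.+3 k j = 0.
  move=> k; split.
    have h := congr1 (fun M : 'M[R[i]]_(1, 3) => complex.Re (M 0 k)) uV.
    rewrite /= Re_mul mxE in h.
    rewrite -[RHS]h; apply: eq_bigr => j _; by rewrite /Vm mxE.
  have h := congr1 (fun M : 'M[R[i]]_(1, 3) => complex.Im (M 0 k)) uV.
  rewrite /= Im_mul mxE in h.
  rewrite -[RHS]h; apply: eq_bigr => j _; by rewrite /Vm mxE.
have [r1 i1] := hV (@Ordinal 3 0 isT).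
have [r2 i2] := hV (@Ordinal 3 1 isT).
have [r3 i3] := hV (@Ordinal 3 2 isT).
rewrite /= !sum_mul1 in r1 i1.
rewrite /= (eq_bigr (fun j : 'I_m.+3 => cs R m.+3 j * ur j)) in r2; last by move=> j _; rewrite mulrC.
rewrite /= (eq_bigr (fun j : 'I_m.+3 => cs R m.+3 j * ui j)) in i2; last by move=> j _; rewrite mulrC.
rewrite /= (eq_bigr (fun j : 'I_m.+3 => sn R m.+3 j * ur j)) in r3; last by move=> j _; rewrite mulrC.
rewrite /= (eq_bigr (fun j : 'I_m.+3 => sn R m.+3 j * ui j)) in i3; last by move=> j _; rewrite mulrC.
have hr : forall j, \sum_(i < m.+3) ur i * Qmat m.+3 d lam i j
    = complex.Re z * ur j - complex.Im z * ui j.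
  move=> j; have h := congr1 (fun M : 'M[R[i]]_(1, 3 + m) => complex.Re (M 0 j)) uQ.
  by rewrite /= Re_mul mxE ReM in h.
have hi : forall j, \sum_(i < m.+3) ui i * Qmat m.+3 d lam i j
    = complex.Re z * ui j + complex.Im z * ur j.
  move=> j; have h := congr1 (fun M : 'M[R[i]]_(1, 3 + m) => complex.Im (M 0 j)) uQ.
  by rewrite /= Im_mul mxE ImM in h.
have hex : exists j, (ur j != 0) || (ui j != 0).
  apply/existsP; apply: contraR un0 => /existsPn h; apply/eqP/matrixP => a j.
  rewrite ord1 mxE; have := h j; rewrite negb_or !negbK /ur /ui.
  by case: (u 0 j) => p q /= /andP[/eqP -> /eqP ->].
have [hy hx] := final_real hn hd hlam r1 r2 r3 i1 i2 i3 hr hi hex.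
rewrite normc_def hy (expr2 (0 : R)) mulr0 addr0 sqrtr_sqr ltcR.
exact: hx.
Qed.
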